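(* For each $\alpha\in\mathbb Z$, the generic locus of the connected component $\mathrm{Bun}^\alpha_{\mathcal G'}$ consists of exactly one element, namely the bundle labelled by the pair $(\tilde w_1^\alpha,\mathring g)$.
   Context: $k$ finite field, $G=\mathrm{GL}_n$, $X=\mathbb P^1$ with coordinate $s$ at $\infty$, $t=s^{-1}$ at $0$. $\mathcal G'$ is the group scheme over $X$ with generic fibre $\mathrm{GL}_n$ and $\mathcal G'(\mathcal O_0)=I^{\mathrm{opp}}$ (preimage of lower triangular matrices in $\mathrm{GL}_n(k[[t]])$), $\mathcal G'(\mathcal O_1)=\mathtt Q$ (preimage of the mirabolic $Q$ = matrices with last row $(0,\dots,0,1)$), $\mathcal G'(\mathcal O_\infty)=I$ (preimage of upper triangular matrices in $\mathrm{GL}_n(k[[s]])$), and $\mathrm{GL}_n(\mathcal O_x)$ elsewhere. Its components $\mathrm{Bun}^\alpha_{\mathcal G'}$ are indexed by the degree $\alpha$ of the underlying vector bundle; the generic locus of a component is the open substack of bundles whose automorphism group has minimal dimension. Bundles are labelled by pairs $(\tilde w,g)$ with $\tilde w\in\widetilde W$ (monomial matrices $w\,\mathrm{diag}(s^{\lambda_i})$) giving the Birkhoff cell $I^-\tilde wI$ of the bundle with levels at $0,\infty$ only (here $I^-=\{g\in\mathrm{GL}_n(k[s^{-1}]):g|_{s^{-1}=0}\text{ lower triangular}\}$), and $g\in\mathrm{GL}_n/Q$ the level at $1$. $\Omega=\{\tilde w\in\widetilde W:\tilde wI\tilde w^{-1}=I\}$, and $\tilde w_1\in\Omega$ is the element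 with $\mathrm{ord}_s\det\tilde w_1=1$ ($\mathrm{ord}\circ\det:\Omega\to\mathbb Z$ is an isomorphism). $w_1$ is the permutation matrix of $(1\,n)$ and $\mathring g=\exp(\sum_{j=2}^nE_{1j})w_1Q\in\mathrm{GL}_n/Q$. *)

(* Defs.v *)
From mathcomp Require Import all_boot all_order fingroup perm all_algebra.
Set Implicit Arguments. Unset Strict Implicit. Unset Printing Implicit Defensive.
Import GRing.Theory Num.Theory.
Local Open Scope ring_scope.

(* An element (sigma, lambda) stands for the monomial matrix                 *)
(*     w~ = w * diag(s^lambda_1, ..., s^lambda_n),                           *)
(* where w is the permutation matrix with w_{a b} = [a = sigma b]; so        *)
(*     w~_{a b} = [a = sigma b] * s^(lambda b).                              *)
Record affW (n : nat) := AffW { aw_perm : 'S_n ; aw_exp : {ffun 'I_n -> int} }.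

(* matrix product: (sigma,lambda)(tau,mu) = (sigma o tau, lambda o tau + mu);
   note (p * q) x = q (p x) for mathcomp permutations. *)
Definition aw_mul n (x y : affW n) : affW n :=
  AffW (aw_perm y * aw_perm x)%g
       [ffun b => aw_exp x (aw_perm y b) + aw_exp y b].
Definition aw_one n : affW n := AffW 1 [ffun => 0].
Definition aw_inv n (x : affW n) : affW n :=
  AffW ((aw_perm x)^-1)%g [ffun b => - aw_exp x (((aw_perm x)^-1)%g b)].
Definition aw_pow n (x : affW n) (a : int) : affW n :=
  match a with
  | Posz m => iter m (aw_mul x) (aw_one n)
  | Negz m => iter m.+1 (aw_mul (aw_inv x)) (aw_one n)
  end.

(* ord_s det w~ (det w~ = +- s^(sum lambda)); this is also the degree of the
   underlying vector bundle, indexing the components Bun^alpha. *)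
Definition ord_det n (x : affW n) : int := \sum_i aw_exp x i.

(* The generator w~_1 of Omega: sigma(i) = i - 1 mod n, lambda = e_1.
   One checks w~ I w~^-1 = I: conjugation sends entry (c,d) to
   (sigma c, sigma d) with valuation shifted by lambda c - lambda d, and
   lambda c - lambda d + [c > d] = [sigma c > sigma d] for all c, d. *)
Definition w1tilde n : affW n :=
  AffW (perm (@ord_pred_inj n))
       [ffun i : 'I_n => if val i == 0%N then 1 else 0].

(* The bundle labelled w~ is the double coset I^- w~ I; its automorphism    *)
(* group is I^- \cap w~ I w~^-1, a group of matrices h with entries in      *)
(* k[t], t = s^-1.  h lies in the (linear) endomorphism space iff           *)
(*   * h(t = 0) is lower triangular, and                                    *)
(*   * w~^-1 h w~ has entries in k[[s]] and is upper triangular mod s;      *)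
(*     its (i,j) entry is s^(lambda j - lambda i) h_{sigma i, sigma j}.     *)
(* allowed x a b d  <=>  the monomial t^d may occur in entry (a,b).         *)
Definition allowed n (x : affW n) (a b : 'I_n) (d : nat) : bool :=
  let i := ((aw_perm x)^-1)%g a in
  let j := ((aw_perm x)^-1)%g b in
  let e := aw_exp x j - aw_exp x i in
  [&& (d == 0%N) ==> (b <= a)%N, (d%:Z <= e) & ((j < i)%N ==> (d%:Z < e))].

Section Bundles.
Variable K : fieldType.

Definition is_end n (x : affW n) (h : 'M[{poly K}]_n) : Prop :=
  forall a b d, ~~ allowed x a b d -> (h a b)`_d = 0.

Definition is_aut n (x : affW n) (h : 'M[{poly K}]_n) : Prop :=
  is_end x h /\ \det h \is a GRing.unit.

Definition eval1 n (h : 'M[{poly K}]_n) : 'M[K]_n := map_mx (fun p => p.[1]) h.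

Definition in_Q n (q : 'M[K]_n.+1) : Prop :=
  forall j, q ord_max j = (j == ord_max)%:R.

(* Bundles of G' are labelled by (w~, g) with g in GL_n(K) (g Q its class).
   (x,g) and (y,g') are isomorphic iff x = y (Birkhoff decomposition) and
   g' Q = h(1) g Q for some automorphism h of the bundle labelled x. *)
Definition bun_iso n (x : affW n.+1) (g : 'M[K]_n.+1)
                     (y : affW n.+1) (g' : 'M[K]_n.+1) : Prop :=
  x = y /\ exists h, is_aut x h /\ in_Q (invmx (eval1 h *m g) *m g').

(* Aut = { h in End(x) : det h unit, g^-1 h(1) g in Q }, an open subset
   of an affine subspace of the finite dimensional space End(x); its
   dimension is that of the linear space (= its Lie algebra)
     { X in End(x) : g^-1 X(1) g has zero last row }.
   End(x) is realized inside polynomial matrices of degree < deg_bound x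
   (entries of End(x) have degree <= lambda j - lambda i <= sum |lambda|),
   an element X : 'I_D -> 'M_n standing for sum_d X_d t^d. *)
Definition deg_bound n (x : affW n) : nat := (\sum_i `|aw_exp x i|%N)%N.+1.

Definition end_mask n (x : affW n)
  (X : {ffun 'I_(deg_bound x) -> 'M[K]_n}) : {ffun 'I_(deg_bound x) -> 'M[K]_n} :=
  [ffun d : 'I_(deg_bound x) => \matrix_(a, b) if allowed x a b d then 0 else X d a b].

Definition stab_map n (x : affW n.+1) (g : 'M[K]_n.+1)
  (X : {ffun 'I_(deg_bound x) -> 'M[K]_n.+1}) : 'rV[K]_n.+1 :=
  row ord_max (invmx g *m (\sum_d X d) *m g).

Definition aut_lie n (x : affW n.+1) (g : 'M[K]_n.+1)
    : {vspace {ffun 'I_(deg_bound x) -> 'M[K]_n.+1}} :=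
  (lker (linfun (@end_mask n.+1 x)) :&: lker (linfun (stab_map g)))%VS.

Definition aut_dim n (x : affW n.+1) (g : 'M[K]_n.+1) : nat := \dim (aut_lie x g).

Definition generic_locus n (alpha : int) (x : affW n.+1) (g : 'M[K]_n.+1) : Prop :=
  [/\ ord_det x = alpha, g \in unitmx &
      forall (y : affW n.+1) (g' : 'M[K]_n.+1),
        ord_det y = alpha -> g' \in unitmx -> (aut_dim x g <= aut_dim y g')%N].

(* ring{g} = exp(sum_{j>=2} E_{1j}) w_1, with w_1 the permutation matrix of
   (1 n); the nilpotent N = sum_{j>=2} E_{1j} has N^2 = 0, so exp N = 1 + N. *)
Definition gring n : 'M[K]_n.+1 :=
  (1%:M + \matrix_(i, j) (((i == ord0) && (j != ord0)) %:R : K))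
    *m tperm_mx ord0 ord_max.

End Bundles.

(* Main.v *)
From HB Require Import structures.
Require Import Defs.
From mathcomp Require Import all_boot all_order fingroup perm all_algebra.
From mathcomp Require Import zify ring lra.
Set Implicit Arguments. Unset Strict Implicit. Unset Printing Implicit Defensive.
Import Order.TTheory GRing.Theory Num.Theory.
Local Open Scope ring_scope.


Lemma affW_eq n (x y : affW n) : aw_perm x = aw_perm y -> aw_exp x =1 aw_exp y -> x = y.
Proof. by case: x => p e; case: y => q f /= -> /ffunP ->. Qed.

Lemma aw_mulA n (x y z : affW n) : aw_mul x (aw_mul y z) = aw_mul (aw_mul x y) z.
Proof.
apply: affW_eq => [|b] /=; first by rewrite mulgA.
by rewrite !ffunE permM addrA.
Qed.

Lemma aw_mul1 n (x : affW n) : aw_mul x (aw_one n) = x.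
Proof. by apply: affW_eq => [|b] /=; rewrite ?mul1g // !ffunE perm1 addr0. Qed.

Lemma aw_1mul n (x : affW n) : aw_mul (aw_one n) x = x.
Proof. by apply: affW_eq => [|b] /=; rewrite ?mulg1 // !ffunE add0r. Qed.

Lemma aw_mulV n (x : affW n) : aw_mul x (aw_inv x) = aw_one n.
Proof.
apply: affW_eq => [|b] /=; first by rewrite mulVg.
by rewrite !ffunE /= subrr.
Qed.

Lemma aw_Vmul n (x : affW n) : aw_mul (aw_inv x) x = aw_one n.
Proof.
apply: affW_eq => [|b] /=; first by rewrite mulgV.
by rewrite !ffunE /= permK addNr.
Qed.

Lemma iter_comm n (z : affW n) m :
  aw_mul z (iter m (aw_mul z) (aw_one n)) = aw_mul (iter m (aw_mul z) (aw_one n)) z.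
Proof.
elim: m => [|m IH] /=; first by rewrite aw_mul1 aw_1mul.
by rewrite -aw_mulA -IH.
Qed.

Lemma ord_det_mul n (x y : affW n) : ord_det (aw_mul x y) = ord_det x + ord_det y.
Proof.
rewrite /ord_det /=.
under eq_bigr do rewrite ffunE.
rewrite big_split /=; congr (_ + _).
by rewrite [RHS](reindex_inj (@perm_inj _ (aw_perm y))).
Qed.
Lemma val_ord_pred n (i : 'I_n) : val (ord_pred i) = if val i == 0%N then n.-1 else (val i).-1.
Proof.
rewrite /=; case: i => i /= lt_in.
case: eqP => [->|ne]; first by rewrite add0n modn_small // prednK // (leq_ltn_trans _ lt_in).
have -> : (i + n).-1 = (i.-1 + n)%N by lia.
by rewrite modnDr modn_small //; lia.
Qed.

Lemma arith_w1 n (i j : 'I_n) (u v : int) (d : nat) :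
  ((d%:Z <= u + (if val j == 0%N then 1 else 0) - (v + (if val i == 0%N then 1 else 0))) &&
   ((j < i)%N ==> (d%:Z < u + (if val j == 0%N then 1 else 0) - (v + (if val i == 0%N then 1 else 0)))))
  = ((d%:Z <= u - v) && ((val (ord_pred j) < val (ord_pred i))%N ==> (d%:Z < u - v))).
Proof.
rewrite !val_ord_pred.
case: i j => [i hi] [j hj] /=.
case: eqP => [->|hi0]; case: eqP => [->|hj0] /=.
- apply/idP/idP; lia.
- apply/idP/idP; lia.
- apply/idP/idP; lia.
- apply/idP/idP; lia.
Qed.

Lemma allowed_w1 n (x : affW n) a b d :
  allowed (aw_mul x (w1tilde n)) a b d = allowed x a b d.
Proof.
rewrite /allowed /= invMg !permM.
set s1 := perm (@ord_pred_inj n).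
move: ((aw_perm x)^-1%g a) ((aw_perm x)^-1%g b) => i j.
have [i' ->] : exists i', i = s1 i' by exists (s1^-1 i)%g; rewrite permKV.
have [j' ->] : exists j', j = s1 j' by exists (s1^-1 j)%g; rewrite permKV.
rewrite !permK !ffunE /=.
congr (_ && _).
by rewrite /s1 !permE arith_w1.
Qed.

Lemma allowed_w1V n (x : affW n) a b d :
  allowed (aw_mul x (aw_inv (w1tilde n))) a b d = allowed x a b d.
Proof. by rewrite -allowed_w1 -aw_mulA aw_Vmul aw_mul1. Qed.

Definition tight n (x : affW n) := forall a b d, allowed x a b d -> a = b /\ d = 0%N.

Lemma allowed_one n a b d : allowed (aw_one n) a b d -> a = b /\ d = 0%N.
Proof.
rewrite /allowed /= invg1 !perm1 !ffunE subrr.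
case/and3P => H1 H2 H3.
have d0 : d = 0%N by move: H2; rewrite lez_nat leqn0 => /eqP.
split => //; move: H1 H3; rewrite d0 /= => H1 H3.
apply: val_inj => /=; move: H1 H3; lia.
Qed.

Lemma allowed_pow n (z : affW n) m a b d :
  (forall y, allowed (aw_mul y z) a b d = allowed y a b d) ->
  allowed (iter m (aw_mul z) (aw_one n)) a b d = allowed (aw_one n) a b d.
Proof.
move=> Hz; elim: m => [|m IH] //=.
by rewrite iter_comm Hz.
Qed.

Lemma tight_pow n (alpha : int) : tight (aw_pow (w1tilde n) alpha).
Proof.
move=> a b d; case: alpha => m /=.
  by rewrite (@allowed_pow _ _ m) //; [apply: allowed_one | move=> y; apply: allowed_w1].
by rewrite (@allowed_pow _ _ m.+1) //; [apply: allowed_one | move=> y; apply: allowed_w1V].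
Qed.

Lemma ord_det_one n : ord_det (aw_one n) = 0.
Proof. by rewrite /ord_det big1 // => i _; rewrite ffunE. Qed.

Lemma ord_det_inv n (x : affW n) : ord_det (aw_inv x) = - ord_det x.
Proof.
apply/eqP; rewrite -addr_eq0 addrC -ord_det_mul aw_mulV ord_det_one //.
Qed.

Lemma ord_det_w1 n : ord_det (w1tilde n.+1) = 1.
Proof.
rewrite /ord_det big_ord_recl /= ffunE /= big1 ?addr0 // => i _.
by rewrite ffunE.
Qed.

Lemma ord_det_iter n (z : affW n) m :
  ord_det (iter m (aw_mul z) (aw_one n)) = ord_det z *+ m.
Proof.
elim: m => [|m IH] /=; first by rewrite ord_det_one.
by rewrite ord_det_mul IH mulrS.
Qed.

Lemma ord_det_pow n (alpha : int) : ord_det (aw_pow (w1tilde n.+1) alpha) = alpha.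
Proof.
case: alpha => m; rewrite /aw_pow ord_det_iter.
  by rewrite ord_det_w1 natz.
rewrite ord_det_inv ord_det_w1 NegzE.
by rewrite mulNrn natz.
Qed.


Lemma incr_ge N (s : {perm 'I_N}) :
  (forall p q : 'I_N, (p < q)%N -> (s p < s q)%N) -> forall p : 'I_N, (p <= s p)%N.
Proof.
move=> Hs; suff H : forall k (hk : (k < N)%N), (k <= s (Ordinal hk))%N.
  by case=> k hk; apply: H.
elim=> [|k IH] hk //.
have hk' : (k < N)%N by lia.
have := Hs (Ordinal hk') (Ordinal hk) (ltnSn k).
have := IH hk'; lia.
Qed.

Lemma incr_perm1 N (s : {perm 'I_N}) :
  (forall p q : 'I_N, (p < q)%N -> (s p < s q)%N) -> s = 1%g.
Proof.
move=> Hs.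
have Hsi : forall p q : 'I_N, (p < q)%N -> ((s^-1)%g p < (s^-1)%g q)%N.
  move=> p q lpq; rewrite ltnNge; apply/negP => le.
  have : (s ((s^-1)%g q) <= s ((s^-1)%g p))%N.
    move: le; rewrite leq_eqVlt => /orP [/eqP/val_inj ->//|lt].
    exact: ltnW (Hs _ _ lt).
  rewrite !permKV; lia.
apply/permP => p; rewrite perm1; apply: val_inj => /=.
have h1 := incr_ge Hs p.
have h2 := incr_ge Hsi (s p); rewrite permK in h2.
lia.
Qed.

Lemma tight_facts n (x : affW n) (p q : 'I_n) : tight x -> (p < q)%N ->
  [/\ aw_exp x q <= aw_exp x p, aw_exp x p <= aw_exp x q + 1 &
      (aw_exp x p = aw_exp x q -> (aw_perm x p < aw_perm x q)%N)].
Proof.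
move=> Ht lpq.
have pq : p != q by apply/eqP => e; move: lpq; rewrite e ltnn.
have F : forall u v d, u != v -> allowed x (aw_perm x u) (aw_perm x v) d = false.
  move=> u v d uv; apply/negP => /Ht [/perm_inj e _]; by rewrite e eqxx in uv.
have F1 := F p q 1%N pq; have F2 := F q p 1%N; rewrite eq_sym in F2.
have F3 := F p q 0%N pq; have {}F2 := F2 pq.
move: F1 F2 F3; rewrite /allowed !permK /=.
rewrite ltnNge (ltnW lpq) lpq /=.
move: (aw_exp x p) (aw_exp x q) => u v.
move=> F1 F2 F3; split.
- by move: F1; lia.
- by move: F2; lia.
- move=> e; move: F3; rewrite e subrr /= andbT; lia.
Qed.

Lemma tight0 n (x : affW n.+1) : tight x -> ord_det x = 0 -> x = aw_one n.+1.
Proof.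
move=> Ht H0.
set l := aw_exp x.
have Hle : forall p q : 'I_n.+1, (p <= q)%N -> l q <= l p.
  move=> p q; rewrite leq_eqVlt => /orP [/eqP/val_inj ->//|lt].
  by case: (tight_facts Ht lt).
have Hc : forall p, l ord_max <= l p by move=> p; apply: Hle; rewrite -ltnS.
have HM : forall p, l p <= l ord0 by move=> p; apply: Hle.
have HMc : l ord0 <= l ord_max + 1.
  case: (posnP n) => [n0|npos].
    have -> : (ord_max : 'I_n.+1) = ord0 by apply: val_inj; rewrite /= n0.
    lia.
  have lt : ((ord0 : 'I_n.+1) < (ord_max : 'I_n.+1))%N by [].
  by case: (tight_facts Ht lt).
have Hconst : l ord0 = l ord_max.
  apply/eqP; rewrite eq_le Hc andbT; apply/negP => Hlt.
  have Hlt' : l ord0 = l ord_max + 1 by move: Hlt HMc; lia.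
  have n0 : ord0 != (ord_max : 'I_n.+1).
    by apply/negP => /eqP e; move: Hlt'; rewrite e; lia.
  have S1 : \sum_i (l i - l ord_max) >= 1.
    rewrite (bigD1 ord0) //= Hlt' [l ord_max + 1]addrC addrK lerDl.
    by apply: sumr_ge0 => i _; rewrite subr_ge0.
  have S2 : \sum_i (l ord0 - l i) >= 1.
    rewrite (bigD1 ord_max) //= Hlt' [l ord_max + 1]addrC addrK lerDl.
    apply: sumr_ge0 => i _; have := HM i; rewrite Hlt'; lia.
  move: S1 S2; rewrite !sumrB !sumr_const card_ord.
  have -> : \sum_i l i = 0 by [].
  rewrite Hlt' !sub0r.
  case: (lerP 0 (l ord_max)) => hc S1 S2.
    by have := mulrn_wge0 n.+1 hc; move: S1; lia.
  have hc' : l ord_max + 1 <= 0 by lia.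
  by have := mulrn_wle0 n.+1 hc'; move: S2; lia.
have Hall : forall p, l p = l ord_max.
  by move=> p; apply/eqP; rewrite eq_le Hc -Hconst HM.
have Hc0 : l ord_max = 0.
  move: H0; rewrite /ord_det -/l (eq_bigr (fun _ => l ord_max)) //.
  rewrite sumr_const card_ord => /eqP; rewrite mulrn_eq0 /= => /eqP //.
have Hl0 : forall p, l p = 0 by move=> p; rewrite Hall.
apply: affW_eq => [|p] /=; last by rewrite ffunE Hl0.
apply: incr_perm1 => p q lpq.
by case: (tight_facts Ht lpq) => _ _; apply; rewrite -/l !Hl0.
Qed.

Lemma tight_mulw1 n (x : affW n) : tight x -> tight (aw_mul x (w1tilde n)).
Proof. by move=> Ht a b d; rewrite allowed_w1; apply: Ht. Qed.

Lemma tight_mulw1V n (x : affW n) : tight x -> tight (aw_mul x (aw_inv (w1tilde n))).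
Proof. by move=> Ht a b d; rewrite allowed_w1V; apply: Ht. Qed.

Lemma tight_uniq n (x : affW n.+1) : tight x -> x = aw_pow (w1tilde n.+1) (ord_det x).
Proof.
set w := w1tilde n.+1.
have Hp : forall m (x : affW n.+1), tight x -> ord_det x = m%:Z ->
    x = iter m (aw_mul w) (aw_one n.+1).
  elim=> [|m IH] y Hy Hd; first exact: tight0.
  have Hy' := tight_mulw1V Hy.
  have E := IH _ Hy'; rewrite ord_det_mul ord_det_inv ord_det_w1 Hd in E.
  have {}E := E (ltac:(lia)).
  rewrite /= iter_comm -E -aw_mulA aw_Vmul aw_mul1 //.
have Hn : forall m (x : affW n.+1), tight x -> ord_det x = - m%:Z ->
    x = iter m (aw_mul (aw_inv w)) (aw_one n.+1).
  elim=> [|m IH] y Hy Hd; first by apply: tight0 => //; rewrite Hd.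
  have Hy' := tight_mulw1 Hy.
  have E := IH _ Hy'; rewrite ord_det_mul ord_det_w1 Hd in E.
  have {}E := E (ltac:(lia)).
  rewrite /= iter_comm -E -aw_mulA aw_mulV aw_mul1 //.
move=> Ht; case E: (ord_det x) => [m|m] /=.
  exact: Hp.
by apply: (Hn m.+1) => //; rewrite E NegzE.
Qed.


Section Lin.
Variables (K : fieldType) (n : nat) (x : affW n.+1) (g : 'M[K]_n.+1).

Lemma end_mask_lin0 a (u v : {ffun 'I_(deg_bound x) -> 'M[K]_n.+1}) :
  end_mask (a *: u + v) = a *: end_mask u + end_mask v.
Proof.
apply/ffunP => d; apply/matrixP => i j.
rewrite /end_mask !(ffunE, mxE); case: (allowed x i j d) => //.
by rewrite mulr0 addr0.
Qed.

Lemma end_mask_lin : linear (@end_mask K n.+1 x).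
Proof. move=> a u v; exact: end_mask_lin0. Qed.

HB.instance Definition _ := GRing.isLinear.Build K _ _ _ (@end_mask K n.+1 x) end_mask_lin.

Lemma stab_map_lin0 a (u v : {ffun 'I_(deg_bound x) -> 'M[K]_n.+1}) :
  stab_map g (a *: u + v) = a *: stab_map g u + stab_map g v.
Proof.
rewrite /stab_map.
rewrite (eq_bigr (fun d => a *: u d + v d)); last by move=> d _; rewrite !ffunE.
rewrite big_split -scaler_sumr /= mulmxDr mulmxDl -scalemxAr -scalemxAl.
by rewrite linearD linearZ.
Qed.

Lemma stab_map_lin : linear (@stab_map K n x g).
Proof. move=> a u v; exact: stab_map_lin0. Qed.

HB.instance Definition _ := GRing.isLinear.Build K _ _ _ (@stab_map K n x g) stab_map_lin.

Lemma mem_aut_lie X : (X \in aut_lie x g) =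
  ((end_mask X == 0) && (stab_map g X == 0)).
Proof. by rewrite memv_cap !memv_ker !lfunE. Qed.

End Lin.


Lemma allowed_bound n (x : affW n) a b d : allowed x a b d -> (d < deg_bound x)%N.
Proof.
rewrite /allowed /deg_bound ltnS /=.
move: ((aw_perm x)^-1%g a) ((aw_perm x)^-1%g b) => i j.
case/and3P => _ H _.
have [e|ij] := eqVneq i j; first by move: H; rewrite e subrr; lia.
rewrite (bigD1 i) //= (bigD1 j) /=; last by rewrite eq_sym.
move: H (\sum_(k | (k != i) && (k != j)) `|aw_exp x k|%N) => H s.
move: H; lia.
Qed.

Section LA.
Variables (K : fieldType) (n : nat).
Local Notation M := 'M[K]_n.+1.

Definition rg (g : M) : 'rV[K]_n.+1 := row ord_max (invmx g).

Lemma stab_mapE (x : affW n.+1) (g : M) (X : {ffun 'I_(deg_bound x) -> M}) :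
  stab_map g X = rg g *m (\sum_d X d) *m g.
Proof. by rewrite /stab_map !row_mul. Qed.

Lemma rv_delta (r : 'rV[K]_n.+1) (a b : 'I_n.+1) : r *m delta_mx a b = r 0 a *: delta_mx 0 b.
Proof.
apply/matrixP => i j; rewrite !mxE (bigD1 a) //= big1 ?addr0.
  by rewrite !mxE !eqxx /= (ord1 i) eqxx /=.
by move=> k ka; rewrite mxE (negbTE ka) mulr0.
Qed.

End LA.

Section LA2.
Variables (K : fieldType) (n : nat).
Local Notation M := 'M[K]_n.+1.

Lemma end_mask0P (x : affW n.+1) (X : {ffun 'I_(deg_bound x) -> M}) :
  end_mask X = 0 -> forall (d : 'I_(deg_bound x)) a b, ~~ allowed x a b d -> X d a b = 0.
Proof.
move=> Hm d a b na; have := congr1 (fun F : {ffun 'I_(deg_bound x) -> M} => F d a b) Hm.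
by rewrite /end_mask !(ffunE, mxE) (negbTE na).
Qed.

Lemma aut_dim_tight0 (x : affW n.+1) (g : M) :
  tight x -> g \in unitmx -> (forall a, rg g 0 a != 0) -> aut_dim x g = 0%N.
Proof.
move=> Ht gU rnz.
apply/eqP; rewrite dimv_eq0 -subv0; apply/subvP => X.
rewrite mem_aut_lie memv0 => /andP [/eqP Hm /eqP Hs].
have HX := end_mask0P Hm.
set o : 'I_(deg_bound x) := ord0.
have HX2 : forall (d : 'I_(deg_bound x)) a b, X d a b != 0 -> a = b /\ d = o.
  move=> d a b nz; have al : allowed x a b d.
    by apply/negPn/negP => na; move: nz; rewrite HX // eqxx.
  by have [-> d0] := Ht _ _ _ al; split => //; apply: val_inj.
have Xd : forall d, d != o -> X d = 0.
  move=> d dno; apply/matrixP => a b; rewrite mxE.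
  apply/eqP; apply/negP => /negP nz; have [_ e] := HX2 _ _ _ nz.
  by rewrite e eqxx in dno.
have Sum : \sum_d X d = X o.
  by rewrite (bigD1 o) //= big1 ?addr0 // => d; apply: Xd.
rewrite stab_mapE Sum in Hs.
have Hs' : rg g *m X o = 0 by rewrite -(mulmxK gU (rg g *m X o)) Hs mul0mx.
have Do : X o = 0.
  apply/matrixP => a b; rewrite mxE.
  have [ab|ab] := eqVneq a b; last first.
    by apply/eqP; apply/negP => /negP nz; have [e _] := HX2 _ _ _ nz; rewrite e eqxx in ab.
  subst b.
  have := congr1 (fun R : 'rV[K]_n.+1 => R 0 a) Hs'.
  rewrite !mxE (bigD1 a) //= big1 ?addr0.
    by move/eqP; rewrite mulf_eq0 (negbTE (rnz a)) /= => /eqP.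
  move=> c ca; apply/eqP; rewrite mulf_eq0; apply/orP; right.
  by apply/negPn/negP => nz; have [e _] := HX2 _ _ _ nz; rewrite e eqxx in ca.
apply/eqP/ffunP => d; rewrite ffunE.
have [->|dno] := eqVneq d o; first by rewrite Do.
exact: Xd.
Qed.

End LA2.

Section LA3.
Variables (K : fieldType) (n : nat) (x : affW n.+1) (g : 'M[K]_n.+1).
Local Notation M := 'M[K]_n.+1.
Local Notation FX := {ffun 'I_(deg_bound x) -> M}.

Definition Emx (d : 'I_(deg_bound x)) (a b : 'I_n.+1) : FX :=
  [ffun d' => (d' == d)%:R *: delta_mx a b].

Lemma sum_Emx (d : 'I_(deg_bound x)) a b : \sum_d' Emx d a b d' = delta_mx a b.
Proof.
rewrite (bigD1 d) //= big1 ?addr0; first by rewrite ffunE eqxx scale1r.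
by move=> d' nd; rewrite ffunE (negbTE nd) scale0r.
Qed.

Lemma end_mask_Emx (d : 'I_(deg_bound x)) a b : allowed x a b d -> end_mask (Emx d a b) = 0.
Proof.
move=> al; apply/ffunP => d'; apply/matrixP => i j.
rewrite /end_mask !(ffunE, mxE).
case: ifP => // nal.
case: eqP => [ed|_] /=; last by rewrite mul0r.
case: eqP => [ia|_] /=; last by rewrite mulr0.
case: eqP => [jb|_] /=; last by rewrite mulr0.
by subst; rewrite al in nal.
Qed.

Lemma stab_Emx (d : 'I_(deg_bound x)) a b : stab_map g (Emx d a b) = rg g 0 a *: (delta_mx 0 b *m g).
Proof. by rewrite stab_mapE sum_Emx rv_delta -scalemxAl. Qed.

Lemma allowed_diag a : allowed x a a 0.
Proof. by rewrite /allowed /= leqnn subrr lexx ltnn. Qed.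

Lemma aut_dim0_facts : g \in unitmx -> aut_dim x g = 0%N ->
  tight x /\ (forall a, rg g 0 a != 0).
Proof.
move=> gU /eqP; rewrite dimv_eq0 => /eqP U0.
have H0 : forall X : FX, end_mask X = 0 -> stab_map g X = 0 -> X = 0.
  move=> X Hm Hs; apply/eqP; rewrite -memv0 -U0 mem_aut_lie Hm Hs !eqxx //.
set o : 'I_(deg_bound x) := ord0.
have rnz : forall a, rg g 0 a != 0.
  move=> a; apply/negP => /eqP r0.
  have := H0 (Emx o a a) (end_mask_Emx (allowed_diag a : allowed x a a o)).
  rewrite stab_Emx r0 scale0r => /(_ erefl) /ffunP /(_ o) /matrixP /(_ a a).
  by rewrite !(ffunE, mxE) !eqxx /= mulr1 => /eqP; rewrite oner_eq0.
split => // a b d al.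
set dd : 'I_(deg_bound x) := Ordinal (allowed_bound al).
set c := rg g 0 a / rg g 0 b.
have := H0 (Emx dd a b - c *: Emx o b b).
rewrite linearB linearZ /= !end_mask_Emx ?allowed_diag // scaler0 subr0 => /(_ erefl).
rewrite linearB linearZ /= !stab_Emx scalerA /c divfK ?rnz // subrr => /(_ erefl).
move=> /ffunP /(_ dd) /matrixP /(_ a b).
rewrite !(ffunE, mxE) !eqxx /= andbT mulr1 => H.
case: eqP H => [edo|_] H; last by move: H; rewrite mul0r mulr0 subr0 => /eqP; rewrite oner_eq0.
case: eqP H => [ab|_] H; last by move: H; rewrite mulr0 mulr0 subr0 => /eqP; rewrite oner_eq0.
by split => //; have := congr1 val edo.
Qed.

End LA3.

Section Gring.
Variables (K : fieldType) (n : nat).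
Local Notation M := 'M[K]_n.+1.

Definition Nm : M := \matrix_(i, j) (((i == ord0) && (j != ord0))%:R : K).
Definition Pm : M := tperm_mx ord0 ord_max.

Lemma gringE : gring K n = (1%:M + Nm) *m Pm.
Proof. by []. Qed.

Lemma NN : Nm *m Nm = 0.
Proof.
apply/matrixP => i j; rewrite !mxE big1 // => k _; rewrite !mxE.
case: k => [[|k] hk]; rewrite /= ?andbF ?mulr0 ?mul0r //.
Qed.

Lemma PP : Pm *m Pm = 1%:M.
Proof. by rewrite /Pm /tperm_mx -perm_mxM tperm2 perm_mx1. Qed.

Lemma gring_inv : gring K n *m (Pm *m (1%:M - Nm)) = 1%:M.
Proof.
rewrite gringE -mulmxA (mulmxA Pm) PP mul1mx mulmxDl mul1mx mulmxBr mulmx1 NN.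
by rewrite subr0 subrK.
Qed.

Lemma gring_unit : gring K n \in unitmx.
Proof. by case: (mulmx1_unit gring_inv). Qed.

Lemma gring_invmx : invmx (gring K n) = Pm *m (1%:M - Nm).
Proof.
by rewrite -[RHS](mulKmx gring_unit) gring_inv mulmx1.
Qed.

Lemma rg_gring a : rg (gring K n) 0 a != 0.
Proof.
rewrite /rg gring_invmx !mxE (bigD1 ord0) //= big1 ?addr0.
  rewrite /Pm /tperm_mx !mxE tpermR eqxx mul1r.
  by case: a => [[|a'] ha]; rewrite /= ?subr0 ?sub0r ?oppr_eq0 oner_eq0.
move=> k nk; rewrite /Pm /tperm_mx !mxE tpermR.
by case: k nk => [[|k] hk] //= _; rewrite mul0r.
Qed.

End Gring.

Section Qlemmas.
Variables (K : fieldType) (n : nat).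
Local Notation M := 'M[K]_n.+1.

Lemma row_cancel (A : M) (u v : 'rV[K]_n.+1) : A \in unitmx -> u *m A = v *m A -> u = v.
Proof. by move=> uA e; rewrite -(mulmxK uA u) e mulmxK. Qed.

Lemma rg_mul (A : M) : A \in unitmx -> rg A *m A = row ord_max 1%:M.
Proof. by move=> uA; rewrite /rg -row_mul mulVmx. Qed.

Lemma inQ_row (Q : M) : in_Q Q <-> row ord_max Q = row ord_max 1%:M.
Proof.
split => [H|H j].
  by apply/rowP => j; rewrite !mxE H eq_sym.
by have := congr1 (fun R : 'rV[K]_n.+1 => R 0 j) H; rewrite !mxE eq_sym.
Qed.

Lemma diag_unit (d : 'rV[K]_n.+1) : (forall a, d 0 a != 0) -> diag_mx d \in unitmx.
Proof.
move=> dnz; rewrite unitmxE det_diag unitfE; apply/prodf_neq0 => i _; exact: dnz.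
Qed.

Lemma inQ_diag (g G0 : M) (d : 'rV[K]_n.+1) :
  g \in unitmx -> G0 \in unitmx -> (forall a, d 0 a != 0) ->
  in_Q (invmx (diag_mx d *m g) *m G0) <-> rg g = rg G0 *m diag_mx d.
Proof.
move=> gU G0U dnz; have DU := diag_unit dnz.
have DgU : diag_mx d *m g \in unitmx by rewrite unitmx_mul DU gU.
set w := row ord_max (invmx (diag_mx d *m g)).
have Hw : w *m (diag_mx d *m g) = row ord_max 1%:M by rewrite /w -row_mul mulVmx.
have Hwg : rg g = w *m diag_mx d.
  by apply: (row_cancel gU); rewrite rg_mul // -mulmxA Hw.
rewrite inQ_row row_mul -/w Hwg.
split => [H|H].
  suff -> : w = rg G0 by [].
  by apply: (row_cancel G0U); rewrite H rg_mul.
have -> : w = rg G0 by apply: (row_cancel DU).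
exact: rg_mul.
Qed.

End Qlemmas.


Section Final.
Variables (K : fieldType) (n : nat).
Local Notation M := 'M[K]_n.+1.

Lemma tight_end (x : affW n.+1) (h : 'M[{poly K}]_n.+1) : tight x -> is_end x h ->
  h = map_mx polyC (diag_mx (\row_a (h a a)`_0)).
Proof.
move=> Ht He; apply/matrixP => a b; rewrite !mxE.
apply/polyP => i; rewrite coefC.
have [ab|nab] := eqVneq a b.
  subst b; rewrite mulr1n.
  case: i => [|i] //=; apply: He; apply/negP => /Ht [_] //.
rewrite mulr0n if_same; apply: He; apply/negP => /Ht [e _].
by rewrite e eqxx in nab.
Qed.

Lemma eval1_C (D : M) : eval1 (map_mx polyC D) = D.
Proof. by apply/matrixP => a b; rewrite !mxE hornerC. Qed.

Lemma det_polyC (D : M) : \det (map_mx polyC D) = (\det D)%:P.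
Proof. exact: (det_map_mx polyC). Qed.

Lemma polyC_unitP (c : K) : (c%:P \is a GRing.unit) = (c != 0).
Proof.
rewrite poly_unitE size_polyC coefC /= unitfE.
by case: (c != 0).
Qed.

End Final.

Theorem corollary8p6 (K : finFieldType) (n : nat) (alpha : int)
    (x : affW n.+1) (g : 'M[K]_n.+1) :
  generic_locus alpha x g <->
  (g \in unitmx /\ bun_iso x g (aw_pow (w1tilde n.+1) alpha) (gring K n)).
Proof.
set y0 := aw_pow (w1tilde n.+1) alpha.
have G0U := @gring_unit K n.
have Ay0 : aut_dim y0 (gring K n) = 0%N.
  apply: aut_dim_tight0; [exact: tight_pow | exact: G0U | exact: rg_gring].
split.
  case=> Hdet gU Hmin.
  have A0 : aut_dim x g = 0%N.
    by apply/eqP; rewrite -leqn0 -Ay0; apply: Hmin => //; rewrite /y0 ord_det_pow.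
  have [Ht rnz] := aut_dim0_facts gU A0.
  have xy : x = y0 by rewrite (tight_uniq Ht) Hdet.
  split => //; split => //.
  set d : 'rV[K]_n.+1 := \row_a (rg g 0 a / rg (gring K n) 0 a).
  have dnz : forall a, d 0 a != 0.
    by move=> a; rewrite mxE mulf_neq0 ?invr_eq0 ?rnz ?rg_gring.
  exists (map_mx polyC (diag_mx d)); split; first split.
  - move=> a b k; rewrite !mxE coefC.
    have [ab|nab] := eqVneq a b; last by rewrite mulr0n if_same.
    subst b; case: k => [|k] //=; by rewrite allowed_diag.
  - by rewrite det_polyC polyC_unitP -unitfE -unitmxE diag_unit.
  rewrite eval1_C; apply/(inQ_diag gU G0U dnz).
  apply/rowP => a; rewrite mul_mx_diag !mxE mulrC divfK //.
  by have := @rg_gring K n a; rewrite /rg mxE.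
case=> gU [xy [h [[He Hu] HQ]]].
have Ht : tight x by rewrite xy; apply: tight_pow.
split; first by rewrite xy ord_det_pow.
  by [].
move=> y g' _ _; rewrite (aut_dim_tight0 Ht gU) //.
set d : 'rV[K]_n.+1 := \row_a (h a a)`_0.
have Hh := tight_end Ht He.
have dnz : forall a, d 0 a != 0.
  move: Hu; rewrite {1}Hh det_polyC polyC_unitP det_diag => /prodf_neq0 H a.
  exact: H.
rewrite Hh eval1_C -/d in HQ.
move/(inQ_diag gU G0U dnz): HQ => HQ a.
rewrite HQ mul_mx_diag mxE mulf_neq0 ?rg_gring //.
Qed.
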